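(* Let $\vec\alpha\in\mathbb{R}^{10}$ be such that $\Psi[\vec\alpha]$ is an irreducible rational function and $\alpha_1+i\alpha_2\ne0$. Then for every $r>0$ the ten maps $K_1[\vec\alpha],\dots,K_{10}[\vec\alpha]:\mathbb{R}^2\to\mathbb{R}^3$ are linearly independent over $\mathbb{R}$.
   Context: Identify $\mathbb{R}^2$ with $\mathbb{C}$, $z=x+iy$; $\mathcal S(z)=\frac{1}{1+|z|^2}(2\,\mathrm{Re}\,z,2\,\mathrm{Im}\,z,|z|^2-1)$ is the stereographic projection. For $\vec\alpha=(\alpha_1,\dots,\alpha_{10})\in\mathbb{R}^{10}$ let $\Psi[\vec\alpha](z)=\frac{(\alpha_1+i\alpha_2)z^2+(\alpha_3+i\alpha_4)z+(\alpha_5+i\alpha_6)}{1-(\alpha_7+i\alpha_8)z-(\alpha_9+i\alpha_{10})z^2}$. For a parameter $r>0$ and $i=1,\dots,10$, $K_i[\vec\alpha]=r^{\beta_i}\,\partial_{\alpha_i}\mathcal S(\Psi[\vec\alpha])$, where $\beta_i=0$ for $i\in\{1,2,5,6\}$, $\beta_i=-1$ for $i\in\{3,4,7,8\}$, $\beta_i=-2$ for $i\in\{9,10\}$. *)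

(* Defs.v *)
From Stdlib Require Import Reals.
From Coquelicot Require Import Coquelicot.
Open Scope R_scope.

(* Parameter vectors alpha in R^10 are represented as alpha : nat -> R,
   using only the indices 1..10 (alpha 1 = alpha_1, ..., alpha 10 = alpha_10). *)

Definition cpx (a b : R) : C := (a, b).

Definition Psi_num (alpha : nat -> R) (z : C) : C :=
  (cpx (alpha 1%nat) (alpha 2%nat) * z * z + cpx (alpha 3%nat) (alpha 4%nat) * z
   + cpx (alpha 5%nat) (alpha 6%nat))%C.

Definition Psi_den (alpha : nat -> R) (z : C) : C :=
  (1 - cpx (alpha 7%nat) (alpha 8%nat) * z - cpx (alpha 9%nat) (alpha 10%nat) * z * z)%C.

Definition Psi (alpha : nat -> R) (z : C) : C := (Psi_num alpha z / Psi_den alpha z)%C.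

(* Psi[alpha] is an irreducible rational function: numerator and denominator
   (polynomials in z over C) are coprime, i.e. have no common complex root. *)
Definition Psi_irreducible (alpha : nat -> R) : Prop :=
  forall z : C, ~ (Psi_num alpha z = 0%C /\ Psi_den alpha z = 0%C).

(* stereographic projection S(z) = (2 Re z, 2 Im z, |z|^2 - 1) / (1 + |z|^2),
   given componentwise: S_comp 0, S_comp 1, S_comp 2 *)
Definition S_comp (k : nat) (z : C) : R :=
  let n2 := Cmod z ^ 2 in
  match k with
  | O => 2 * Re z / (1 + n2)
  | 1%nat => 2 * Im z / (1 + n2)
  | _ => (n2 - 1) / (1 + n2)
  end.

Definition upd (alpha : nat -> R) (i : nat) (t : R) : nat -> R :=
  fun j => if Nat.eqb j i then t else alpha j.

Definition rbeta (r : R) (i : nat) : R :=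
  match i with
  | 1%nat | 2%nat | 5%nat | 6%nat => 1
  | 3%nat | 4%nat | 7%nat | 8%nat => / r
  | _ => / (r ^ 2)
  end.

Definition K (alpha : nat -> R) (r : R) (i : nat) (k : nat) (z : C) : R :=
  rbeta r i * Derive (fun t => S_comp k (Psi (upd alpha i t) z)) (alpha i).

Definition lincomb (c : nat -> R) (alpha : nat -> R) (r : R) (k : nat) (z : C) : R :=
  sum_f_R0 (fun n => c (S n) * K alpha r (S n) k z) 9.

(* Main.v *)
Require Import Defs.
From Stdlib Require Import Reals Lra Lia Classical.
From Coquelicot Require Import Coquelicot.
Open Scope R_scope.

Definition dS (k:nat) (w v : C) : R :=
 let u := fst w in let y := snd w in let p := fst v in let q := snd v in
 let n := u^2 + y^2 in let l := u*p + y*q in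
 match k with
 | O => (2*p*(1+n) - 2*u*(2*l))/(1+n)^2
 | 1%nat => (2*q*(1+n) - 2*y*(2*l))/(1+n)^2
 | _ => (2*l*(1+n) - (n-1)*(2*l))/(1+n)^2 end.

Lemma S_derive_uv k (u v : R -> R) t0 p q :
  is_derive u t0 p -> is_derive v t0 q ->
  is_derive (fun t => S_comp k (u t, v t)) t0 (dS k (u t0, v t0) (p,q)).
Proof.
  intros Hu Hv.
  assert (Hn : forall t, Cmod (u t, v t) ^ 2 = u t ^ 2 + v t ^ 2).
  { intro t. unfold Cmod. rewrite pow2_sqrt; [reflexivity|]. simpl. nra. }
  assert (Hpos : forall t, 0 < 1 + (u t ^ 2 + v t ^ 2)) by (intro t; nra).
  assert (Du : Derive (fun x => u x) t0 = p) by (apply is_derive_unique; exact Hu). assert (Dv : Derive (fun x => v x) t0 = q) by (apply is_derive_unique; exact Hv).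
  assert (Eu : ex_derive u t0) by (eexists; eauto).
  assert (Ev : ex_derive v t0) by (eexists; eauto).
  specialize (Hpos t0).
  destruct k as [|[|k]].
  - apply is_derive_ext with (f := fun t => 2 * u t / (1 + (u t ^ 2 + v t ^ 2))).
    { intro t. unfold S_comp. rewrite Hn. reflexivity. }
    auto_derive; [repeat split; auto; lra|].
    rewrite Du, Dv. unfold dS. simpl. field. lra.
  - apply is_derive_ext with (f := fun t => 2 * v t / (1 + (u t ^ 2 + v t ^ 2))).
    { intro t. unfold S_comp. rewrite Hn. reflexivity. }
    auto_derive; [repeat split; auto; lra|].
    rewrite Du, Dv. unfold dS. simpl. field. lra.
  - apply is_derive_ext with (f := fun t => ((u t ^ 2 + v t ^ 2) - 1) / (1 + (u t ^ 2 + v t ^ 2))).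
    { intro t. unfold S_comp. rewrite Hn. reflexivity. }
    auto_derive; [repeat split; auto; lra|].
    rewrite Du, Dv. unfold dS. simpl. field. lra.
Qed.

Lemma C_nz (e f : R) : ((e, f) : C) <> 0%C -> e ^ 2 + f ^ 2 <> 0.
Proof.
  intros H Hc. apply H. assert (e = 0) by nra. assert (f = 0) by nra. subst. reflexivity.
Qed.

Lemma quot_derive (n0 n1 d0 d1 : C) t0 : d0 <> 0%C ->
  is_derive (fun t => fst ((n0 + RtoC (t - t0) * n1) / (d0 + RtoC (t - t0) * d1))%C) t0
    (fst ((n1 * d0 - n0 * d1) / (d0 * d0))%C) /\
  is_derive (fun t => snd ((n0 + RtoC (t - t0) * n1) / (d0 + RtoC (t - t0) * d1))%C) t0
    (snd ((n1 * d0 - n0 * d1) / (d0 * d0))%C).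
Proof.
  destruct n0 as [a b], n1 as [c d], d0 as [e f], d1 as [g h]. intro Hd.
  apply C_nz in Hd.
  unfold Cdiv, Cinv, Cmult, Cplus, Cminus, Copp, RtoC; simpl.
  assert (H2 : (e * e - f * f) * ((e * e - f * f) * 1) + (e * f + f * e) * ((e * f + f * e) * 1) <> 0).
  { replace ((e * e - f * f) * ((e * e - f * f) * 1) + (e * f + f * e) * ((e * f + f * e) * 1))
      with ((e^2+f^2)*(e^2+f^2)) by ring. apply Rmult_integral_contrapositive; tauto. }
  assert (H1 : e * (e * 1) + f * (f * 1) <> 0).
  { replace (e * (e * 1) + f * (f * 1)) with (e^2+f^2) by ring. exact Hd. }
  split; auto_derive; replace (t0 + - t0) with 0 by ring;
   [ repeat split; replace (e + (0 * g + - (0 * h))) with e by ring;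
     replace (f + (0 * h + 0 * g)) with f by ring; exact H1
   | field; split; [ contradict H2; rewrite <- H2; ring | contradict H1; rewrite <- H1; ring ]
   | repeat split; replace (e + (0 * g + - (0 * h))) with e by ring;
     replace (f + (0 * h + 0 * g)) with f by ring; exact H1
   | field; split; [ contradict H2; rewrite <- H2; ring | contradict H1; rewrite <- H1; ring ] ].
Qed.
Definition Ci : C := (0, 1).
Definition ni (i : nat) (z : C) : C :=
  match i with 1 => z*z | 2 => Ci*z*z | 3 => z | 4 => Ci*z | 5 => 1 | 6 => Ci | _ => 0 end%C.
Definition di (i : nat) (z : C) : C :=
  match i with 7 => -z | 8 => -(Ci*z) | 9 => -(z*z) | 10 => -(Ci*z*z) | _ => 0 end%C.

Lemma Psi_upd alpha i z t :
  Psi (upd alpha i t) z =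
  ((Psi_num alpha z + RtoC (t - alpha i) * ni i z) / (Psi_den alpha z + RtoC (t - alpha i) * di i z))%C.
Proof.
  assert (Hn : Psi_num (upd alpha i t) z = (Psi_num alpha z + RtoC (t - alpha i) * ni i z)%C).
  { unfold Psi_num, upd, ni, cpx. destruct z as [x y].
    destruct i as [|[|[|[|[|[|[|i]]]]]]]; simpl;
    unfold Cmult, Cplus, RtoC, Ci; simpl; f_equal; ring. }
  assert (Hd : Psi_den (upd alpha i t) z = (Psi_den alpha z + RtoC (t - alpha i) * di i z)%C).
  { unfold Psi_den, upd, di, cpx. destruct z as [x y].
    destruct i as [|[|[|[|[|[|[|[|[|[|[|i]]]]]]]]]]]; simpl;
    unfold Cminus, Copp, Cmult, Cplus, RtoC, Ci; simpl; f_equal; ring. }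
  unfold Psi. rewrite Hn, Hd. reflexivity.
Qed.

Lemma sq_eq (u y : R) : 0 <= u -> 0 <= y -> u * u = y * y -> u = y.
Proof. intros. nra. Qed.

Lemma Csqrt_ex (w : C) : exists s : C, (s * s = w)%C.
Proof.
  destruct w as [x y].
  set (m := sqrt (x^2 + y^2)).
  assert (Hm0 : 0 <= m) by apply sqrt_pos.
  assert (Hm2 : m * m = x^2 + y^2) by (apply sqrt_sqrt; nra).
  assert (Hmx1 : 0 <= (m + x) / 2) by nra.
  assert (Hmx2 : 0 <= (m - x) / 2) by nra.
  set (a := sqrt ((m + x) / 2)). set (b := sqrt ((m - x) / 2)).
  assert (Ha : a * a = (m + x) / 2) by (apply sqrt_sqrt; auto).
  assert (Hb : b * b = (m - x) / 2) by (apply sqrt_sqrt; auto).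
  assert (Ha0 : 0 <= a) by apply sqrt_pos. assert (Hb0 : 0 <= b) by apply sqrt_pos.
  assert (Hab : (2 * a * b) * (2 * a * b) = y * y).
  { replace ((2 * a * b) * (2 * a * b)) with (4 * (a * a) * (b * b)) by ring.
    rewrite Ha, Hb. nra. }
  destruct (Rle_lt_dec 0 y) as [Hy|Hy].
  - exists (a, b). unfold Cmult; simpl. apply injective_projections; simpl.
    + nra.
    + replace (a * b + b * a) with (2 * a * b) by ring. apply sq_eq; nra.
  - exists (a, - b). unfold Cmult; simpl. apply injective_projections; simpl.
    + nra.
    + assert (2 * a * b = - y) by (apply sq_eq; nra). nra.
Qed.

Lemma Cdbl_nz (a : C) : a <> 0%C -> (a + a)%C <> 0%C.
Proof.
  intros H E. apply H. destruct a as [p q]. unfold Cplus in E. simpl in E.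
  injection E; intros. apply injective_projections; simpl; lra.
Qed.

Lemma Cmul_0 (a d : C) : d <> 0%C -> (a * d)%C = 0%C -> a = 0%C.
Proof.
  intros Hd H. replace a with (a * d / d)%C by (field; auto). rewrite H. field. auto.
Qed.

Lemma roots (al be ga : C) : al <> 0%C ->
  exists z0 z1, (al * (z0 + z1) = - be)%C /\ (al * z0 * z1 = ga)%C.
Proof.
  intro Hal. destruct (Csqrt_ex (be * be - (al + al) * (ga + ga))%C) as [s Hs].
  assert (H2 := Cdbl_nz _ Hal).
  exists ((- be + s) / (al + al))%C, ((- be - s) / (al + al))%C. split.
  - field. auto.
  - transitivity (al * (be * be - s * s) / ((al + al) * (al + al)))%C.
    + field. auto.
    + rewrite Hs. field. auto.
Qed.

Lemma alg (al be ga de ep a1 a2 b1 b2 : C) :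
  al <> 0%C ->
  (forall z, ~ ((al*z*z + be*z + ga = 0)%C /\ (1 - de*z - ep*z*z = 0)%C)) ->
  (a1 - 0*de + ga*b1 = 0)%C ->
  (a2 - a1*de - 0*ep + be*b1 + ga*b2 = 0)%C ->
  (- (a2*de) - a1*ep + al*b1 + be*b2 = 0)%C ->
  (- (a2*ep) + al*b2 = 0)%C ->
  a1 = 0%C /\ a2 = 0%C /\ b1 = 0%C /\ b2 = 0%C.
Proof.
  intros Hal Hirr H1 H2 H3 H4.
  assert (HQ1 : forall z, ((a2*z + a1)*(1 - de*z - ep*z*z) + (al*z*z + be*z + ga)*(b1 + b2*z) = 0)%C).
  { intro z.
    assert (Hx : ((a2*z + a1)*(1 - de*z - ep*z*z) + (al*z*z + be*z + ga)*(b1 + b2*z)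
      = (a1 - 0*de + ga*b1) + (a2 - a1*de - 0*ep + be*b1 + ga*b2)*z
        + (- (a2*de) - a1*ep + al*b1 + be*b2)*z*z + (- (a2*ep) + al*b2)*z*z*z)%C) by ring.
    rewrite Hx, H1, H2, H3, H4. ring. }
  assert (HQ2 : forall z, (a2*(1 - de*z - ep*z*z) + (a2*z + a1)*(- de - (ep+ep)*z)
      + (al*(z+z) + be)*(b1 + b2*z) + (al*z*z + be*z + ga)*b2 = 0)%C).
  { intro z.
    assert (Hx : (a2*(1 - de*z - ep*z*z) + (a2*z + a1)*(- de - (ep+ep)*z)
      + (al*(z+z) + be)*(b1 + b2*z) + (al*z*z + be*z + ga)*b2
      = (a2 - a1*de - 0*ep + be*b1 + ga*b2)
        + ((- (a2*de) - a1*ep + al*b1 + be*b2) + (- (a2*de) - a1*ep + al*b1 + be*b2))*z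
        + ((- (a2*ep) + al*b2) + (- (a2*ep) + al*b2) + (- (a2*ep) + al*b2))*z*z)%C) by ring.
    rewrite Hx, H2, H3, H4. ring. }
  destruct (roots al be ga Hal) as [z0 [z1 [Hs Hp]]].
  assert (Hbe : be = (- (al * (z0 + z1)))%C) by (rewrite Hs; ring).
  assert (HN : forall z, (al*z*z + be*z + ga = al*(z - z0)*(z - z1))%C).
  { intro z. rewrite Hbe, <- Hp. ring. }
  assert (HD0 : (1 - de*z0 - ep*z0*z0)%C <> 0%C).
  { intro E. apply (Hirr z0). split; auto. rewrite HN. ring. }
  assert (HD1 : (1 - de*z1 - ep*z1*z1)%C <> 0%C).
  { intro E. apply (Hirr z1). split; auto. rewrite HN. ring. }
  assert (HA0 : (a2*z0 + a1 = 0)%C).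
  { apply (Cmul_0 _ _ HD0). specialize (HQ1 z0). rewrite HN in HQ1.
    rewrite <- HQ1. ring. }
  assert (HA1 : (a2*z1 + a1 = 0)%C).
  { apply (Cmul_0 _ _ HD1). specialize (HQ1 z1). rewrite HN in HQ1.
    rewrite <- HQ1. ring. }
  assert (Ha2 : a2 = 0%C).
  { destruct (classic (z0 = z1)) as [E|E].
    - subst z1. apply (Cmul_0 _ _ HD0). specialize (HQ2 z0). rewrite HN in HQ2.
      rewrite <- HQ2. rewrite Hbe. 
      replace (a2 * z0 + a1)%C with (a2 * z0 + a1 - 0)%C by ring. rewrite <- HA0. ring.
    - assert (Hz : (z0 - z1)%C <> 0%C).
      { intro F. apply E. replace z0 with (z0 - z1 + z1)%C by ring. rewrite F. ring. }
      apply (Cmul_0 _ _ Hz).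
      transitivity ((a2*z0 + a1) - (a2*z1 + a1))%C; [ring|]. rewrite HA0, HA1. ring. }
  subst a2.
  assert (Ha1 : a1 = 0%C) by (rewrite <- HA0; ring).
  subst a1.
  assert (Hb2 : b2 = 0%C).
  { apply (Cmul_0 _ _ Hal). rewrite <- H4. ring. }
  subst b2.
  assert (Hb1 : b1 = 0%C).
  { apply (Cmul_0 _ _ Hal). rewrite <- H3. ring. }
  auto.
Qed.

Lemma vander (x0 x1 x2 x3 x4 h : R) : h <> 0 ->
  x0 + x1 * 0 + x2 * 0^2 + x3 * 0^3 + x4 * 0^4 = 0 ->
  x0 + x1 * (1*h) + x2 * (1*h)^2 + x3 * (1*h)^3 + x4 * (1*h)^4 = 0 ->
  x0 + x1 * (2*h) + x2 * (2*h)^2 + x3 * (2*h)^3 + x4 * (2*h)^4 = 0 ->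
  x0 + x1 * (3*h) + x2 * (3*h)^2 + x3 * (3*h)^3 + x4 * (3*h)^4 = 0 ->
  x0 + x1 * (4*h) + x2 * (4*h)^2 + x3 * (4*h)^3 + x4 * (4*h)^4 = 0 ->
  x0 = 0 /\ x1 = 0 /\ x2 = 0 /\ x3 = 0 /\ x4 = 0.
Proof.
  intros Hh E0 E1 E2 E3 E4.
  set (y1 := x1 * h). set (y2 := x2 * h^2). set (y3 := x3 * h^3). set (y4 := x4 * h^4).
  assert (F0 : x0 = 0) by (rewrite <- E0; ring).
  assert (F1 : x0 + y1 + y2 + y3 + y4 = 0) by (rewrite <- E1; unfold y1,y2,y3,y4; ring).
  assert (F2 : x0 + 2*y1 + 4*y2 + 8*y3 + 16*y4 = 0) by (rewrite <- E2; unfold y1,y2,y3,y4; ring).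
  assert (F3 : x0 + 3*y1 + 9*y2 + 27*y3 + 81*y4 = 0) by (rewrite <- E3; unfold y1,y2,y3,y4; ring).
  assert (F4 : x0 + 4*y1 + 16*y2 + 64*y3 + 256*y4 = 0) by (rewrite <- E4; unfold y1,y2,y3,y4; ring).
  assert (G1 : y1 = 0) by lra. assert (G2 : y2 = 0) by lra.
  assert (G3 : y3 = 0) by lra. assert (G4 : y4 = 0) by lra.
  unfold y1, y2, y3, y4 in *.
  repeat split; auto.
  - destruct (Rmult_integral _ _ G1); auto; contradiction.
  - destruct (Rmult_integral _ _ G2); auto. exfalso; apply (pow_nonzero h 2); auto.
  - destruct (Rmult_integral _ _ G3); auto. exfalso; apply (pow_nonzero h 3); auto.
  - destruct (Rmult_integral _ _ G4); auto. exfalso; apply (pow_nonzero h 4); auto.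
Qed.

Definition Pc (e0 e1 e2 e3 e4 z : C) : C := (e0 + e1*z + e2*z*z + e3*z*z*z + e4*z*z*z*z)%C.

Lemma Pc_fst e0 e1 e2 e3 e4 t :
  fst (Pc e0 e1 e2 e3 e4 (RtoC t)) = fst e0 + fst e1 * t + fst e2 * t^2 + fst e3 * t^3 + fst e4 * t^4.
Proof. destruct e0, e1, e2, e3, e4. unfold Pc, Cplus, Cmult, RtoC. simpl. ring. Qed.
Lemma Pc_snd e0 e1 e2 e3 e4 t :
  snd (Pc e0 e1 e2 e3 e4 (RtoC t)) = snd e0 + snd e1 * t + snd e2 * t^2 + snd e3 * t^3 + snd e4 * t^4.
Proof. destruct e0, e1, e2, e3, e4. unfold Pc, Cplus, Cmult, RtoC. simpl. ring. Qed.

Lemma C_zero (e : C) : fst e = 0 -> snd e = 0 -> e = 0%C.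
Proof. destruct e; simpl; intros; subst; reflexivity. Qed.

Lemma coefC (e0 e1 e2 e3 e4 : C) (h : R) : h <> 0 ->
  (forall t, t = 0 \/ t = 1*h \/ t = 2*h \/ t = 3*h \/ t = 4*h -> Pc e0 e1 e2 e3 e4 (RtoC t) = 0%C) ->
  e0 = 0%C /\ e1 = 0%C /\ e2 = 0%C /\ e3 = 0%C /\ e4 = 0%C.
Proof.
  intros Hh H.
  assert (Hf : forall t, t = 0 \/ t = 1*h \/ t = 2*h \/ t = 3*h \/ t = 4*h ->
     fst e0 + fst e1 * t + fst e2 * t^2 + fst e3 * t^3 + fst e4 * t^4 = 0).
  { intros t Ht. rewrite <- Pc_fst, (H t Ht). reflexivity. }
  assert (Hs : forall t, t = 0 \/ t = 1*h \/ t = 2*h \/ t = 3*h \/ t = 4*h ->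
     snd e0 + snd e1 * t + snd e2 * t^2 + snd e3 * t^3 + snd e4 * t^4 = 0).
  { intros t Ht. rewrite <- Pc_snd, (H t Ht). reflexivity. }
  destruct (vander (fst e0) (fst e1) (fst e2) (fst e3) (fst e4) h Hh) as [A0 [A1 [A2 [A3 A4]]]];
    try (apply Hf; tauto).
  destruct (vander (snd e0) (snd e1) (snd e2) (snd e3) (snd e4) h Hh) as [B0 [B1 [B2 [B3 B4]]]];
    try (apply Hs; tauto).
  repeat split; apply C_zero; auto.
Qed.

Lemma Dre_nz (dr er t : R) : 0 <= t -> t * (1 + Rabs dr + Rabs er) <= 1/2 ->
  1 - dr * t - er * t * t <> 0.
Proof.
  intros Ht HM E.
  assert (Hr : Rabs (dr * t + er * t * t) <= Rabs dr * t + Rabs er * t * t).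
  { eapply Rle_trans; [apply Rabs_triang|]. rewrite !Rabs_mult, (Rabs_right t) by lra. lra. }
  assert (Ht1 : t <= 1/2).
  { assert (0 <= t * Rabs dr) by (apply Rmult_le_pos; auto; apply Rabs_pos).
    assert (0 <= t * Rabs er) by (apply Rmult_le_pos; auto; apply Rabs_pos). nra. }
  assert (Ht2 : Rabs er * t * t <= Rabs er * t).
  { assert (0 <= Rabs er * t) by (apply Rmult_le_pos; auto; apply Rabs_pos). nra. }
  replace (dr * t + er * t * t) with 1 in Hr by lra. rewrite Rabs_R1 in Hr.
  pose proof (Rabs_pos dr). pose proof (Rabs_pos er). nra.
Qed.

Lemma D_nz (de ep : C) (t : R) : 0 <= t -> t * (1 + Rabs (fst de) + Rabs (fst ep)) <= 1/2 ->
  (1 - de * RtoC t - ep * RtoC t * RtoC t)%C <> 0%C.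
Proof.
  intros H1 H2 E. apply (Dre_nz (fst de) (fst ep) t H1 H2).
  apply (f_equal fst) in E. destruct de, ep. unfold Cminus, Copp, Cplus, Cmult, RtoC in E.
  simpl in E |- *. rewrite <- E. ring.
Qed.

Lemma dS_add k w v1 v2 : dS k w (v1 + v2)%C = dS k w v1 + dS k w v2.
Proof.
  destruct w as [u y], v1, v2. assert (0 < 1 + (u^2 + y^2)) by nra.
  destruct k as [|[|k]]; unfold dS, Cplus; simpl; field; lra.
Qed.
Lemma dS_scal k w c v : dS k w (RtoC c * v)%C = c * dS k w v.
Proof.
  destruct w as [u y], v. assert (0 < 1 + (u^2 + y^2)) by nra.
  destruct k as [|[|k]]; unfold dS, Cmult, RtoC; simpl; field; lra.
Qed.
Lemma div0 a b : a / b = 0 -> b <> 0 -> a = 0.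
Proof.
  intros H Hb. unfold Rdiv in H. destruct (Rmult_integral _ _ H); auto.
  exfalso; apply (Rinv_neq_0_compat b Hb); auto.
Qed.

Lemma dS_zero w v : dS 0 w v = 0 -> dS 1 w v = 0 -> dS 2 w v = 0 -> v = 0%C.
Proof.
  destruct w as [u y], v as [p q]. unfold dS; simpl. intros H0 H1 H2.
  assert (Hp : 0 < 1 + (u*(u*1) + y*(y*1))) by nra.
  apply div0 in H0; [|nra]. apply div0 in H1; [|nra]. apply div0 in H2; [|nra].
  assert (L : u*p + y*q = 0) by nra.
  assert (P0 : p = 0) by nra.
  assert (Q0 : q = 0) by nra.
  subst. reflexivity.
Qed.

Lemma finish (al be ga de ep a0 a1 a2 b1 b2 : C) :
  al <> 0%C ->
  (forall z, ~ ((al*z*z + be*z + ga = 0)%C /\ (1 - de*z - ep*z*z = 0)%C)) ->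
  (forall z, (1 - de*z - ep*z*z)%C <> 0%C ->
     ((a2*z*z + a1*z + a0)*(1 - de*z - ep*z*z) + (al*z*z + be*z + ga)*(b1*z + b2*z*z) = 0)%C) ->
  a0 = 0%C /\ a1 = 0%C /\ a2 = 0%C /\ b1 = 0%C /\ b2 = 0%C.
Proof.
  intros Hal Hirr HQ.
  set (M := 1 + Rabs (fst de) + Rabs (fst ep)).
  assert (HM : 0 < M) by (unfold M; pose proof (Rabs_pos (fst de)); pose proof (Rabs_pos (fst ep)); lra).
  set (h := / (8 * M)).
  assert (Hh : 0 < h) by (unfold h; apply Rinv_0_lt_compat; lra).
  destruct (coefC a0 (a1 - a0*de + ga*b1)%C (a2 - a1*de - a0*ep + be*b1 + ga*b2)%C
      (- (a2*de) - a1*ep + al*b1 + be*b2)%C (- (a2*ep) + al*b2)%C h) as [E0 [E1 [E2 [E3 E4]]]].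
  { lra. }
  { intros t Ht.
    assert (Hk : exists k, 0 <= k <= 4 /\ t = k * h).
    { destruct Ht as [H|[H|[H|[H|H]]]]; [exists 0|exists 1|exists 2|exists 3|exists 4]; split; try lra;
      rewrite H; ring. }
    destruct Hk as [k [Hk Ht']].
    assert (HD : (1 - de * RtoC t - ep * RtoC t * RtoC t)%C <> 0%C).
    { apply D_nz.
      - rewrite Ht'. apply Rmult_le_pos; lra.
      - fold M. rewrite Ht'. unfold h. replace (k * / (8 * M) * M) with (k / 8) by (field; lra). lra. }
    rewrite <- (HQ _ HD). unfold Pc. ring. }
  subst a0.
  destruct (alg al be ga de ep a1 a2 b1 b2 Hal Hirr E1 E2 E3 E4) as [A1 [A2 [B1 B2]]].
  auto.
Qed.

Definition vv alpha i z :=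
  ((ni i z * Psi_den alpha z - Psi_num alpha z * di i z) / (Psi_den alpha z * Psi_den alpha z))%C.

Lemma deriv_full k (n0 n1 d0 d1 : C) (t0 : R) : d0 <> 0%C ->
  Derive (fun t => S_comp k ((n0 + RtoC (t - t0) * n1) / (d0 + RtoC (t - t0) * d1))%C) t0
  = dS k (n0 / d0)%C ((n1 * d0 - n0 * d1) / (d0 * d0))%C.
Proof.
  intro Hd. destruct (quot_derive n0 n1 d0 d1 t0 Hd) as [Hu Hv].
  apply is_derive_unique.
  pose proof (S_derive_uv k _ _ t0 _ _ Hu Hv) as H.
  cbv beta in H. rewrite <- !surjective_pairing in H.
  replace (t0 - t0) with 0 in H by ring.
  replace ((n0 + RtoC 0 * n1) / (d0 + RtoC 0 * d1))%C with (n0 / d0)%C in H by (f_equal; ring).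
  refine (is_derive_ext _ _ t0 _ _ H).
  intro t. f_equal.
Qed.

Lemma K_val alpha r i k z : Psi_den alpha z <> 0%C ->
  K alpha r i k z = rbeta r i * dS k (Psi alpha z) (vv alpha i z).
Proof.
  intro HD. unfold K. f_equal.
  rewrite (Derive_ext _ _ _ (fun t => f_equal (S_comp k) (Psi_upd alpha i z t))).
  apply deriv_full; auto.
Qed.

Definition cc (c : nat -> R) r j := c j * rbeta r j.

Definition rho c r alpha z :=
  (RtoC (cc c r 1) * vv alpha 1 z + RtoC (cc c r 2) * vv alpha 2 z + RtoC (cc c r 3) * vv alpha 3 z
   + RtoC (cc c r 4) * vv alpha 4 z + RtoC (cc c r 5) * vv alpha 5 z + RtoC (cc c r 6) * vv alpha 6 z
   + RtoC (cc c r 7) * vv alpha 7 z + RtoC (cc c r 8) * vv alpha 8 z + RtoC (cc c r 9) * vv alpha 9 z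
   + RtoC (cc c r 10) * vv alpha 10 z)%C.

Lemma lincomb_eq c alpha r k z : Psi_den alpha z <> 0%C ->
  lincomb c alpha r k z = dS k (Psi alpha z) (rho c r alpha z).
Proof.
  intro HD. unfold lincomb, rho. cbn [sum_f_R0].
  rewrite !(K_val alpha r _ k z HD). rewrite !dS_add, !dS_scal. unfold cc. ring.
Qed.

Lemma C_split (x y : R) : (RtoC x + RtoC y * Ci)%C = 0%C -> x = 0 /\ y = 0.
Proof.
  intro H. apply (f_equal fst) in H as H1. apply (f_equal snd) in H as H2.
  unfold Cplus, Cmult, RtoC, Ci in H1, H2; simpl in H1, H2. split; lra.
Qed.

Lemma rbeta_nz r j : 0 < r -> rbeta r j <> 0.
Proof.
  intro Hr. unfold rbeta.
  destruct j as [|[|[|[|[|[|[|[|[|j]]]]]]]]];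
  try (apply Rinv_neq_0_compat; apply pow_nonzero; lra);
  try (apply Rinv_neq_0_compat; lra); lra.
Qed.

Theorem lemma4p1 (alpha : nat -> R) :
  Psi_irreducible alpha ->
  cpx (alpha 1%nat) (alpha 2%nat) <> 0%C ->
  forall r : R, 0 < r ->
  forall c : nat -> R,
    (forall (z : C) (k : nat), Psi_den alpha z <> 0%C -> (k < 3)%nat ->
       lincomb c alpha r k z = 0) ->
    forall i : nat, (1 <= i <= 10)%nat -> c i = 0.
Proof.
  intros Hirr Hal r Hr c Hc i Hi.
  assert (Hrho : forall z, Psi_den alpha z <> 0%C -> rho c r alpha z = 0%C).
  { intros z HD. apply (dS_zero (Psi alpha z)); rewrite <- lincomb_eq; auto; apply Hc; auto. }
  destruct (finish (cpx (alpha 1%nat) (alpha 2%nat)) (cpx (alpha 3%nat) (alpha 4%nat))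
     (cpx (alpha 5%nat) (alpha 6%nat)) (cpx (alpha 7%nat) (alpha 8%nat)) (cpx (alpha 9%nat) (alpha 10%nat))
     (RtoC (cc c r 5) + RtoC (cc c r 6) * Ci)%C (RtoC (cc c r 3) + RtoC (cc c r 4) * Ci)%C
     (RtoC (cc c r 1) + RtoC (cc c r 2) * Ci)%C (RtoC (cc c r 7) + RtoC (cc c r 8) * Ci)%C
     (RtoC (cc c r 9) + RtoC (cc c r 10) * Ci)%C Hal Hirr) as [A0 [A1 [A2 [B1 B2]]]].
  { intros z HD. change (1 - cpx (alpha 7%nat) (alpha 8%nat) * z - cpx (alpha 9%nat) (alpha 10%nat) * z * z)%C
      with (Psi_den alpha z) in HD |- *.
    change (cpx (alpha 1%nat) (alpha 2%nat) * z * z + cpx (alpha 3%nat) (alpha 4%nat) * z + cpx (alpha 5%nat) (alpha 6%nat))%C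
      with (Psi_num alpha z).
    transitivity (rho c r alpha z * (Psi_den alpha z * Psi_den alpha z))%C.
    - unfold rho, vv. cbn [ni di]. field. auto.
    - rewrite (Hrho z HD). ring. }
  apply C_split in A0, A1, A2, B1, B2.
  assert (Hcc : forall j, cc c r j = 0 -> c j = 0).
  { intros j Hj. unfold cc in Hj. destruct (Rmult_integral _ _ Hj); auto.
    exfalso; apply (rbeta_nz r j Hr); auto. }
  destruct Hi as [Hi1 Hi2].
  destruct i as [|[|[|[|[|[|[|[|[|[|[|i]]]]]]]]]]]; try lia; apply Hcc; tauto.
Qed.
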